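(* Let $\mathsf E=\{\mathsf E_x\}_{x\in\mathcal X}$ be a non-trivial observable on $\mathcal H_S$. Its Lüders instrument $\mathcal I^L_x(\rho)=\sqrt{\mathsf E_x}\,\rho\,\sqrt{\mathsf E_x}$ is implemented by some measurement scheme constrained by the third law if and only if $\mathsf E$ is completely unsharp.
   Context: All Hilbert spaces are finite-dimensional and complex. A state is a positive operator of unit trace; it is full-rank if it is positive definite. A channel is a completely positive trace-preserving linear map. A channel is constrained by the third law if it maps every full-rank state on its input space to a full-rank state on its output space. Let $2\le\dim\mathcal H_S<\infty$. An observable is a finite family $\mathsf E=\{\mathsf E_x\}_{x\in\mathcal X}$ of nonzero operators with $0\le\mathsf E_x\le\mathbb 1$ and $\sum_x\mathsf E_x=\mathbb 1$. It is non-trivial if some $\mathsf E_x$ is not a multiple of $\mathbb 1$. It is completely unsharp if, for every $x$, the spectrum of $\mathsf E_x$ contains neither $0$ nor $1$. A measurement scheme $(\mathcal H_A,\xi,\mathcal E,\mathsf Z)$ consists of: - a finite-dimensional $\mathcal H_A$; - a state $\xi$ on $\mathcal H_A$; - a channel $\mathcal E$ on $\mathcal L(\mathcal H_S\otimes\mathcal H_A)$; - positive operators $\{\mathsf Z_x\}_{x\in\mathcal X}$ on $\mathcal H_A$ summing to $\mathbb 1$. It implements $\mathcal I_x(\rho)=\mathrm{tr}_A[(\mathbb 1\otimes\mathsf Z_x)\mathcal E(\rho\otimes\xi)]$. It is constrained by the third law if $\xi$ is full-rank and $\mathcal E$ is constrained by the third law. *)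

(* Defs.v *)
From HB Require Import structures.
From mathcomp Require Import all_boot all_order all_algebra.
From mathcomp Require Import complex mxtens.
From mathcomp Require Import Rstruct.
From Stdlib Require Import ClassicalEpsilon.

Set Implicit Arguments.
Unset Strict Implicit.
Unset Printing Implicit Defensive.

Import Order.TTheory GRing.Theory Num.Theory.
Local Open Scope ring_scope.

Definition C : numClosedFieldType := (Rdefinitions.R)[i].

Definition adj {m n : nat} (A : 'M[C]_(m, n)) : 'M[C]_(n, m) :=
  (map_mx Num.conj A)^T.

Definition psd {n : nat} (A : 'M[C]_n) : Prop :=
  adj A = A /\ forall v : 'cV[C]_n, 0 <= (adj v *m A *m v) 0 0.

(* positive definite operator (= full-rank positive operator) *)
Definition posdef {n : nat} (A : 'M[C]_n) : Prop :=
  adj A = A /\ forall v : 'cV[C]_n, v != 0 -> 0 < (adj v *m A *m v) 0 0.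

Definition is_state {n : nat} (rho : 'M[C]_n) : Prop := psd rho /\ \tr rho = 1.

Definition full_rank_state {n : nat} (rho : 'M[C]_n) : Prop :=
  posdef rho /\ \tr rho = 1.

Definition is_linear_map {n m : nat} (f : 'M[C]_n -> 'M[C]_m) : Prop :=
  forall (a : C) (A B : 'M[C]_n), f (a *: A + B) = a *: f A + f B.

(* the ampliation id_k (x) f : L(C^k (x) H_n) -> L(C^k (x) H_m),
   with the tensor index convention of mxtens (first factor = C^k) *)
Definition ampliation (k : nat) {n m : nat} (f : 'M[C]_n -> 'M[C]_m)
  (X : 'M[C]_(k * n)) : 'M[C]_(k * m) :=
  \matrix_(i, j)
    (f (\matrix_(a, b) X (mxtens_index ((mxtens_unindex i).1, a))
                         (mxtens_index ((mxtens_unindex j).1, b))))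
      (mxtens_unindex i).2 (mxtens_unindex j).2.

Arguments ampliation k {n m} f X.

Definition completely_positive {n m : nat} (f : 'M[C]_n -> 'M[C]_m) : Prop :=
  forall (k : nat) (X : 'M[C]_(k * n)), psd X -> psd (ampliation k f X).

Definition trace_preserving {n m : nat} (f : 'M[C]_n -> 'M[C]_m) : Prop :=
  forall X : 'M[C]_n, \tr (f X) = \tr X.

Definition is_channel {n m : nat} (f : 'M[C]_n -> 'M[C]_m) : Prop :=
  [/\ is_linear_map f, completely_positive f & trace_preserving f].

Definition third_law_channel {n m : nat} (f : 'M[C]_n -> 'M[C]_m) : Prop :=
  is_channel f /\ forall rho : 'M[C]_n, full_rank_state rho -> full_rank_state (f rho).

(* partial trace over the second factor H_A of H_S (x) H_A *)
Definition ptrace2 {n m : nat} (Y : 'M[C]_(n * m)) : 'M[C]_n :=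
  \matrix_(i, j) \sum_(a < m) Y (mxtens_index (i, a)) (mxtens_index (j, a)).

Definition observable {X : finType} {n : nat} (E : X -> 'M[C]_n) : Prop :=
  [/\ forall x, E x != 0,
      forall x, psd (E x) /\ psd (1%:M - E x)
    & \sum_(x : X) E x = 1%:M].

Definition nontrivial_obs {X : finType} {n : nat} (E : X -> 'M[C]_n) : Prop :=
  exists x : X, forall c : C, E x != c%:M.

Definition completely_unsharp {X : finType} {n : nat} (E : X -> 'M[C]_n) : Prop :=
  forall x : X, ~~ eigenvalue (E x) 0 /\ ~~ eigenvalue (E x) 1.

Definition msqrt {n : nat} (A : 'M[C]_n) : 'M[C]_n :=
  epsilon (inhabits 0) (fun S : 'M[C]_n => psd S /\ S *m S = A).

Definition luders {X : finType} {n : nat} (E : X -> 'M[C]_n) (x : X)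
  (rho : 'M[C]_n) : 'M[C]_n :=
  msqrt (E x) *m rho *m msqrt (E x).

(* measurement schemes (H_A, xi, E, Z) with outcome set X, H_A = C^dimA *)
Record scheme (n : nat) (X : finType) := Scheme {
  dimA : nat;
  xi : 'M[C]_dimA;
  chan : 'M[C]_(n * dimA) -> 'M[C]_(n * dimA);
  Zp : X -> 'M[C]_dimA }.

Arguments dimA {n X} s.
Arguments xi {n X} s.
Arguments chan {n X} s _.
Arguments Zp {n X} s _.

Definition valid_scheme {n : nat} {X : finType} (S : scheme n X) : Prop :=
  [/\ is_state (xi S), is_channel (chan S),
      forall x, psd (Zp S x) & \sum_(x : X) Zp S x = 1%:M].

Definition third_law_scheme {n : nat} {X : finType} (S : scheme n X) : Prop :=
  [/\ valid_scheme S, full_rank_state (xi S) & third_law_channel (chan S)].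

Definition scheme_instrument {n : nat} {X : finType} (S : scheme n X) (x : X)
  (rho : 'M[C]_n) : 'M[C]_n :=
  ptrace2 ((1%:M *t Zp S x) *m chan S (rho *t xi S)).

Definition implements {n : nat} {X : finType} (S : scheme n X)
  (I : X -> 'M[C]_n -> 'M[C]_n) : Prop :=
  forall (x : X) (rho : 'M[C]_n), scheme_instrument S x rho = I x rho.

(* Main.v *)
Require Import Defs.
From HB Require Import structures.
From mathcomp Require Import all_boot all_order all_algebra.
From mathcomp Require Import complex mxtens.
From mathcomp Require Import spectral sesquilinear.
From mathcomp Require Import ring.
From Stdlib Require Import ClassicalEpsilon.

Set Implicit Arguments.
Unset Strict Implicit.
Unset Printing Implicit Defensive.
Import Order.TTheory GRing.Theory Num.Theory.
Local Open Scope ring_scope.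

Lemma adjE m n (A : 'M[C]_(m,n)) i j : adj A i j = (A j i)^*.
Proof. by rewrite !mxE. Qed.

Lemma adjK m n (A : 'M[C]_(m,n)) : adj (adj A) = A.
Proof. by apply/matrixP=> i j; rewrite !adjE conjCK. Qed.

Lemma adj_mul m n p (A : 'M[C]_(m,n)) (B : 'M[C]_(n,p)) :
  adj (A *m B) = adj B *m adj A.
Proof.
apply/matrixP=> i j; rewrite adjE !mxE rmorph_sum; apply: eq_bigr => k _.
by rewrite !adjE rmorphM mulrC.
Qed.

Lemma adjD m n (A B : 'M[C]_(m,n)) : adj (A + B) = adj A + adj B.
Proof. by apply/matrixP=> i j; rewrite !mxE rmorphD. Qed.

Lemma adjZ m n (a : C) (A : 'M[C]_(m,n)) : adj (a *: A) = a^* *: adj A.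
Proof. by apply/matrixP=> i j; rewrite !mxE rmorphM. Qed.

Lemma adjN m n (A : 'M[C]_(m,n)) : adj (- A) = - adj A.
Proof. by apply/matrixP=> i j; rewrite !mxE rmorphN. Qed.

Lemma adj0 m n : adj (0 : 'M[C]_(m,n)) = 0.
Proof. by apply/matrixP=> i j; rewrite !mxE rmorph0. Qed.

Lemma adj_sum m n (I : finType) (P : pred I) (F : I -> 'M[C]_(m,n)) :
  adj (\sum_(i | P i) F i) = \sum_(i | P i) adj (F i).
Proof.
apply/matrixP=> i j; rewrite adjE !summxE rmorph_sum; apply: eq_bigr => k _.
by rewrite adjE.
Qed.

Lemma adj_scalar n (a : C) : adj (a%:M : 'M[C]_n) = (a^*)%:M.
Proof.
by apply/matrixP=> i j; rewrite adjE !mxE rmorphMn eq_sym.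
Qed.

Lemma adj1 n : adj (1%:M : 'M[C]_n) = 1%:M.
Proof. by rewrite adj_scalar rmorph1. Qed.

Lemma adj_delta m n (i : 'I_m) (j : 'I_n) : adj (delta_mx i j : 'M[C]_(m,n)) = delta_mx j i.
Proof.
apply/matrixP=> a b; rewrite adjE !mxE.
by case: (b == i); case: (a == j); rewrite /= ?rmorph0 ?rmorph1.
Qed.

Lemma adj_tens m n p q (A : 'M[C]_(m,n)) (B : 'M[C]_(p,q)) :
  adj (A *t B) = adj A *t adj B.
Proof. by apply/matrixP=> i j; rewrite !mxE rmorphM. Qed.

Definition qf n (A : 'M[C]_n) (v : 'cV[C]_n) : C := (adj v *m A *m v) 0 0.

Lemma qf_conj m n (K : 'M[C]_(m,n)) (A : 'M[C]_m) (v : 'cV[C]_n) :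
  qf (adj K *m A *m K) v = qf A (K *m v).
Proof. by rewrite /qf adj_mul !mulmxA. Qed.

Lemma qfD n (A B : 'M[C]_n) v : qf (A + B) v = qf A v + qf B v.
Proof. by rewrite /qf mulmxDr mulmxDl mxE. Qed.

Lemma qfZ n (a : C) (A : 'M[C]_n) v : qf (a *: A) v = a * qf A v.
Proof. by rewrite /qf -scalemxAr -scalemxAl mxE. Qed.

Lemma qfN n (A : 'M[C]_n) v : qf (- A) v = - qf A v.
Proof. by rewrite /qf mulmxN mulNmx mxE. Qed.

Lemma qf0 n (v : 'cV[C]_n) : qf 0 v = 0.
Proof. by rewrite /qf mulmx0 mul0mx mxE. Qed.

Lemma qf_sum n (I : finType) (P : pred I) (F : I -> 'M[C]_n) v :
  qf (\sum_(i | P i) F i) v = \sum_(i | P i) qf (F i) v.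
Proof.
rewrite /qf mulmx_sumr mulmx_suml summxE; apply: eq_bigr => i _.
by [].
Qed.

Lemma qfE n (A : 'M[C]_n) v :
  qf A v = \sum_j \sum_i (v i 0)^* * A i j * v j 0.
Proof.
rewrite /qf mxE; apply: eq_bigr => j _; rewrite mxE mulr_suml.
by apply: eq_bigr => i _; rewrite adjE.
Qed.

Lemma normvE n (v : 'cV[C]_n) : (adj v *m v) 0 0 = \sum_i v i 0 * (v i 0)^*.
Proof. by rewrite mxE; apply: eq_bigr => i _; rewrite adjE mulrC. Qed.

Lemma normv_ge0 n (v : 'cV[C]_n) : 0 <= (adj v *m v) 0 0.
Proof. by rewrite normvE; apply: sumr_ge0 => i _; apply: mul_conjC_ge0. Qed.

Lemma normv_eq0 n (v : 'cV[C]_n) : (adj v *m v) 0 0 = 0 -> v = 0.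
Proof.
rewrite normvE => /psumr_eq0P H; apply/matrixP => i j.
rewrite ord1 mxE; apply/eqP; rewrite -mul_conjC_eq0; apply/eqP.
by apply: H => // k _; apply: mul_conjC_ge0.
Qed.

Lemma normv_gt0 n (v : 'cV[C]_n) : v != 0 -> 0 < (adj v *m v) 0 0.
Proof.
move=> nz; rewrite lt_def normv_ge0 andbT; apply/eqP => /normv_eq0 h.
by rewrite h eqxx in nz.
Qed.

Lemma psd_conj m n (K : 'M[C]_(m,n)) (A : 'M[C]_m) :
  psd A -> psd (adj K *m A *m K).
Proof.
case=> hA pA; split; first by rewrite !adj_mul adjK hA mulmxA.
by move=> v; have := qf_conj K A v; rewrite /qf => ->; apply: pA.
Qed.

Lemma unit_mul_neq0 n (K : 'M[C]_n) (v : 'cV[C]_n) :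
  K \in unitmx -> v != 0 -> K *m v != 0.
Proof.
move=> uK; apply: contra => /eqP h.
by rewrite -(mulKmx uK v) h mulmx0.
Qed.

Lemma posdef_conj n (K : 'M[C]_n) (A : 'M[C]_n) :
  posdef A -> K \in unitmx -> posdef (adj K *m A *m K).
Proof.
case=> hA pA uK; split; first by rewrite !adj_mul adjK hA mulmxA.
by move=> v nz; have := qf_conj K A v; rewrite /qf => ->; apply: pA; apply: unit_mul_neq0.
Qed.

Lemma posdef_psd n (A : 'M[C]_n) : posdef A -> psd A.
Proof.
case=> hA pA; split=> // v; have [->|nz] := eqVneq v 0.
  by rewrite mulmx0 mxE.
exact: ltW (pA v nz).
Qed.

Lemma psd_sum n (I : finType) (P : pred I) (F : I -> 'M[C]_n) :
  (forall i, P i -> psd (F i)) -> psd (\sum_(i | P i) F i).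
Proof.
move=> h; split.
  by rewrite adj_sum; apply: eq_bigr => i /h [].
move=> v; rewrite -/(qf _ v) qf_sum; apply: sumr_ge0 => i /h [_]; apply.
Qed.

Lemma psd_qf n (A : 'M[C]_n) v : psd A -> 0 <= qf A v.
Proof. by case=> _; apply. Qed.

Lemma posdef_qf n (A : 'M[C]_n) v : posdef A -> v != 0 -> 0 < qf A v.
Proof. by case=> _; apply. Qed.
Lemma sum_tens_gen (R : nmodType) m p (F : 'I_(m * p) -> R) :
  \sum_k F k = \sum_i \sum_a F (mxtens_index (i, a)).
Proof.
rewrite pair_big [RHS](reindex (@mxtens_unindex m p)).
  by apply: eq_bigr => k _; rewrite -surjective_pairing mxtens_unindexK.
by exists (@mxtens_index m p) => k _; rewrite (mxtens_indexK, mxtens_unindexK).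
Qed.

Lemma sum_tens m p (F : 'I_(m * p) -> C) :
  \sum_k F k = \sum_i \sum_a F (mxtens_index (i, a)).
Proof. exact: sum_tens_gen. Qed.

Lemma sum0_gen (R : nmodType) (I : finType) (P : pred I) (F : I -> R) :
  (forall i, P i -> F i = 0) -> \sum_(i | P i) F i = 0.
Proof. exact: big1. Qed.

Lemma exchange_gen (R : nmodType) (I J : finType) (P : pred I) (Q : pred J) (F : I -> J -> R) :
  \sum_(i | P i) \sum_(j | Q j) F i j = \sum_(j | Q j) \sum_(i | P i) F i j.
Proof. exact: exchange_big. Qed.

Lemma bigD1_gen (R : nmodType) (I : finType) (j : I) (P : pred I) (F : I -> R) :
  P j -> \sum_(i | P i) F i = F j + \sum_(i | P i && (i != j)) F i.
Proof. exact: bigD1. Qed.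
Arguments bigD1_gen {R I} j {P F}.

Lemma sum_delta_l (R : pzSemiRingType) n (i : 'I_n) (F : 'I_n -> R) :
  \sum_j (i == j)%:R * F j = F i.
Proof.
rewrite (bigD1_gen i) //= eqxx mul1r sum0_gen ?addr0 // => j /negPf.
by rewrite eq_sym => ->; rewrite mul0r.
Qed.

Lemma sum_delta_r (R : pzSemiRingType) n (i : 'I_n) (F : 'I_n -> R) :
  \sum_j F j * (j == i)%:R = F i.
Proof.
rewrite (bigD1_gen i) //= eqxx mulr1 sum0_gen ?addr0 // => j /negPf ->.
by rewrite mulr0.
Qed.

Lemma mxtens_index_eq m p (i j : 'I_m) (a b : 'I_p) :
  (mxtens_index (i, a) == mxtens_index (j, b)) = (i == j) && (a == b).
Proof. by rewrite (can_eq (@mxtens_indexK m p)) xpair_eqE. Qed.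

Lemma tensmxDl m n p q (A B : 'M[C]_(m,n)) (D : 'M[C]_(p,q)) :
  (A + B) *t D = A *t D + B *t D.
Proof. by apply/matrixP=> i j; rewrite !mxE mulrDl. Qed.

Lemma tensmxDr m n p q (A : 'M[C]_(m,n)) (B D : 'M[C]_(p,q)) :
  A *t (B + D) = A *t B + A *t D.
Proof. by apply/matrixP=> i j; rewrite !mxE mulrDr. Qed.

Lemma tensmxZl m n p q (a : C) (A : 'M[C]_(m,n)) (D : 'M[C]_(p,q)) :
  (a *: A) *t D = a *: (A *t D).
Proof. by apply/matrixP=> i j; rewrite !mxE mulrA. Qed.

Lemma tensmxZr m n p q (a : C) (A : 'M[C]_(m,n)) (D : 'M[C]_(p,q)) :
  A *t (a *: D) = a *: (A *t D).
Proof. by apply/matrixP=> i j; rewrite !mxE mulrCA. Qed.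

Lemma tensmx_suml m n p q (I : finType) (P : pred I) (F : I -> 'M[C]_(m,n)) (D : 'M[C]_(p,q)) :
  (\sum_(i | P i) F i) *t D = \sum_(i | P i) F i *t D.
Proof.
apply/matrixP=> i j; rewrite !mxE !summxE mulr_suml; apply: eq_bigr => k _.
by rewrite !mxE.
Qed.

Lemma tensmx_sumr m n p q (I : finType) (P : pred I) (A : 'M[C]_(m,n)) (F : I -> 'M[C]_(p,q)) :
  A *t (\sum_(i | P i) F i) = \sum_(i | P i) A *t F i.
Proof.
apply/matrixP=> i j; rewrite !mxE !summxE mulr_sumr; apply: eq_bigr => k _.
by rewrite !mxE.
Qed.

Lemma tens11 m p : (1%:M : 'M[C]_m) *t (1%:M : 'M[C]_p) = 1%:M.
Proof.
apply/matrixP=> i j.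
case: (mxtens_indexP i) => i1 i2; case: (mxtens_indexP j) => j1 j2.
rewrite tensmxE !mxE mxtens_index_eq.
by case: (i1 == j1); case: (i2 == j2); rewrite /= ?mulr1 ?mulr0.
Qed.

Lemma mxtrace_tens m p (A : 'M[C]_m) (B : 'M[C]_p) : \tr (A *t B) = \tr A * \tr B.
Proof. by rewrite /mxtrace mulr_sum; apply: eq_bigr => i _; rewrite mxE. Qed.

Lemma ptrace2E n m (Y : 'M[C]_(n * m)) i j :
  ptrace2 Y i j = \sum_a Y (mxtens_index (i, a)) (mxtens_index (j, a)).
Proof. by rewrite mxE. Qed.

Lemma ptrace2D n m (A B : 'M[C]_(n * m)) : ptrace2 (A + B) = ptrace2 A + ptrace2 B.
Proof. by apply/matrixP=> i j; rewrite !mxE -big_split; apply: eq_bigr => a _; rewrite mxE. Qed.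

Lemma ptrace2Z n m (c : C) (A : 'M[C]_(n * m)) : ptrace2 (c *: A) = c *: ptrace2 A.
Proof. by apply/matrixP=> i j; rewrite !mxE mulr_sumr; apply: eq_bigr => a _; rewrite mxE. Qed.

Lemma ptrace2N n m (A : 'M[C]_(n * m)) : ptrace2 (- A) = - ptrace2 A.
Proof. by rewrite -scaleN1r ptrace2Z scaleN1r. Qed.

Lemma ptrace2_0 n m : ptrace2 (0 : 'M[C]_(n * m)) = 0.
Proof. by apply/matrixP=> i j; rewrite !mxE sum0_gen // => a _; rewrite mxE. Qed.

Lemma ptrace2_sum n m (I : finType) (P : pred I) (F : I -> 'M[C]_(n * m)) :
  ptrace2 (\sum_(i | P i) F i) = \sum_(i | P i) ptrace2 (F i).
Proof.
apply/matrixP=> i j; rewrite mxE summxE.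
under eq_bigr => a _ do rewrite summxE.
rewrite exchange_gen; apply: eq_bigr => k _.
by rewrite mxE.
Qed.

Lemma ptrace2_tens n m (A : 'M[C]_n) (B : 'M[C]_m) : ptrace2 (A *t B) = \tr B *: A.
Proof.
apply/matrixP=> i j; rewrite ptrace2E [RHS]mxE /mxtrace mulr_suml; apply: eq_bigr => a _.
by rewrite tensmxE mulrC.
Qed.

Lemma mxtrace_ptrace2 n m (Y : 'M[C]_(n * m)) : \tr (ptrace2 Y) = \tr Y.
Proof.
rewrite /mxtrace [RHS]sum_tens; apply: eq_bigr => i _; by rewrite mxE.
Qed.

Lemma psd_diag n (d : 'rV[C]_n) : (forall i, 0 <= d 0 i) -> psd (diag_mx d).
Proof.
move=> h; split.
  apply/matrixP=> i j; rewrite adjE !mxE rmorphMn eq_sym.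
  have [<-|] := eqVneq i j; last by rewrite !mulr0n.
  rewrite ?eqxx !mulr1n; exact: (conj_Creal (ger0_real (h i))).
move=> v; rewrite -/(qf _ v) qfE; apply: sumr_ge0 => j _.
rewrite (bigD1_gen j) // sum0_gen ?addr0.
  rewrite !mxE eqxx mulr1n mulrC mulrA; apply: mulr_ge0 => //.
  exact: mul_conjC_ge0.
by move=> i /negPf hij; rewrite !mxE hij mulr0n mulr0 mul0r.
Qed.

Lemma qf_diag_delta n (d : 'rV[C]_n) i : qf (diag_mx d) (delta_mx i 0) = d 0 i.
Proof.
rewrite qfE (bigD1_gen i) // sum0_gen ?addr0.
  rewrite (bigD1_gen i) // sum0_gen ?addr0.
    by rewrite !mxE !eqxx mulr1n rmorph1 mul1r mulr1.
  by move=> k /negPf hk; rewrite !mxE hk rmorph0 !mul0r.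
by move=> j /negPf hj; rewrite sum0_gen // => k _; rewrite !mxE hj !mulr0.
Qed.
Lemma adj_trC m n (A : 'M[C]_(m,n)) : adj A = (A ^t* )%sesqui.
Proof. by apply/matrixP=> i j; rewrite !mxE. Qed.

Lemma sqrt_exists n (A : 'M[C]_n) : psd A -> exists S : 'M[C]_n, psd S /\ S *m S = A.
Proof.
move=> psdA; have [hA pA] := psdA.
have nA : A \is normalmx by apply/normalmxP; rewrite -adj_trC hA.
have eA := elimT (orthomx_spectralP (A:=A)) nA.
set P := spectralmx A in eA; set d := spectral_diag A in eA.
have uP : P \is unitarymx := spectral_unitarymx A.
have iP : invmx P = adj P by rewrite invmx_unitary // adj_trC.
have PP : P *m adj P = 1%:M by rewrite adj_trC; apply/unitarymxP.
rewrite iP in eA.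
have d_ge0 : forall i, 0 <= d 0 i.
  move=> i; have := psd_qf (adj P *m delta_mx i 0) psdA.
  by rewrite eA qf_conj mulmxA PP mul1mx qf_diag_delta.
pose s : 'rV[C]_n := \row_i sqrtC (d 0 i).
exists (adj P *m diag_mx s *m P); split.
  by apply: psd_conj; apply: psd_diag => i; rewrite mxE sqrtC_ge0.
rewrite -!mulmxA [P *m (adj P *m _)]mulmxA PP mul1mx [diag_mx s *m (_ *m _)]mulmxA.
rewrite mulmx_diag eA -!mulmxA; congr (_ *m (_ *m _)); congr diag_mx.
by apply/rowP=> j; rewrite !mxE -expr2 sqrtCK.
Qed.

Lemma msqrtP n (A : 'M[C]_n) : psd A -> psd (msqrt A) /\ msqrt A *m msqrt A = A.
Proof. move=> pA; exact: (epsilon_spec (inhabits 0) (fun S : 'M[C]_n => psd S /\ S *m S = A) (sqrt_exists pA)). Qed.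

Lemma psd_sq n (A : 'M[C]_n) : psd A -> exists S : 'M[C]_n, adj S = S /\ S *m S = A.
Proof. by move=> /sqrt_exists [S [[hS _] SS]]; exists S. Qed.

Lemma qf_sq n (S : 'M[C]_n) v : adj S = S -> qf (S *m S) v = (adj (S *m v) *m (S *m v)) 0 0.
Proof. by move=> hS; rewrite /qf adj_mul hS !mulmxA. Qed.

Lemma psd_q0 n (A : 'M[C]_n) : psd A -> (forall v, qf A v = 0) -> A = 0.
Proof.
move=> /psd_sq [S [hS <-]] h.
have S0 : S = 0.
  apply/matrixP=> i j; have := h (delta_mx j 0); rewrite qf_sq // => /normv_eq0.
  by rewrite -colE => /matrixP /(_ i 0); rewrite !mxE.
by rewrite S0 mul0mx.
Qed.
Lemma split_gen (R : nmodType) (I : finType) (P : pred I) (F G : I -> R) :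
  \sum_(i | P i) (F i + G i) = \sum_(i | P i) F i + \sum_(i | P i) G i.
Proof. exact: big_split. Qed.

Lemma tr_sum_gen (R : pzRingType) n (I : finType) (P : pred I) (F : I -> 'M[R]_n) :
  \tr (\sum_(i | P i) F i) = \sum_(i | P i) \tr (F i).
Proof. exact: raddf_sum. Qed.

Lemma sum_ge0_pos (I : finType) (F : I -> C) (j : I) :
  (forall i, 0 <= F i) -> 0 < F j -> 0 < \sum_i F i.
Proof.
move=> h hj; rewrite (bigD1_gen j) //; apply: ltr_wpDr => //.
by apply: sumr_ge0 => i _; apply: h.
Qed.

Definition kraus (J : finType) p q (K : J -> 'M[C]_(p,q)) (T : 'M[C]_p) : 'M[C]_q :=
  \sum_j adj (K j) *m T *m K j.

Lemma kraus_linear (J : finType) p q (K : J -> 'M[C]_(p,q)) : is_linear_map (kraus K).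
Proof.
move=> a A B; rewrite /kraus scaler_sumr -split_gen; apply: eq_bigr => j _.
by rewrite mulmxDr mulmxDl -scalemxAr -scalemxAl.
Qed.

Lemma kraus_herm (J : finType) p q (K : J -> 'M[C]_(p,q)) T :
  adj T = T -> adj (kraus K T) = kraus K T.
Proof.
move=> hT; rewrite /kraus adj_sum; apply: eq_bigr => j _.
by rewrite !adj_mul adjK hT mulmxA.
Qed.

Lemma kraus_psd (J : finType) p q (K : J -> 'M[C]_(p,q)) T :
  psd T -> psd (kraus K T).
Proof. by move=> pT; apply: psd_sum => j _; apply: psd_conj. Qed.

Lemma kraus_posdef (J : finType) p q (K : J -> 'M[C]_(p,q)) T :
  posdef T -> (forall w : 'cV[C]_q, w != 0 -> exists j, K j *m w != 0) -> posdef (kraus K T).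
Proof.
move=> pdT hK; have [hT _] := pdT; split; first exact: kraus_herm.
move=> w nw; have [j0 hj0] := hK w nw.
change (0 < qf (kraus K T) w); rewrite /kraus qf_sum.
apply: (@sum_ge0_pos _ (fun j => qf (adj (K j) *m T *m K j) w) j0).
  by move=> j; rewrite qf_conj; apply: psd_qf; apply: posdef_psd.
by rewrite qf_conj; apply: posdef_qf.
Qed.

Lemma kraus_tp (J : finType) p q (K : J -> 'M[C]_(p,q)) :
  \sum_j K j *m adj (K j) = 1%:M -> trace_preserving (kraus K).
Proof.
move=> hK T; rewrite /kraus tr_sum_gen.
transitivity (\tr ((\sum_j K j *m adj (K j)) *m T)); last by rewrite hK mul1mx.
rewrite mulmx_suml tr_sum_gen; apply: eq_bigr => j _.
by rewrite mxtrace_mulC mulmxA.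
Qed.

Lemma tens1_mulE k p q r (A : 'M[C]_(p,q)) (X : 'M[C]_(k * q, r)) i1 i2 V :
  ((1%:M *t A) *m X) (mxtens_index (i1, i2)) V =
  \sum_u A i2 u * X (mxtens_index (i1, u)) V.
Proof.
rewrite mxE sum_tens.
under eq_bigr => u1 _ do under eq_bigr => u2 _ do rewrite tensmxE mxE -mulrA.
under eq_bigr => u1 _ do rewrite -mulr_sumr.
by rewrite sum_delta_l.
Qed.

Lemma mul_tens1E k p q r (B : 'M[C]_(p,q)) (Y : 'M[C]_(r, k * p)) U j1 j2 :
  (Y *m (1%:M *t B)) U (mxtens_index (j1, j2)) =
  \sum_v Y U (mxtens_index (j1, v)) * B v j2.
Proof.
rewrite mxE sum_tens.
under eq_bigr => u1 _ do under eq_bigr => u2 _ do rewrite tensmxE mxE mulrCA eq_sym.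
under eq_bigr => u1 _ do rewrite -mulr_sumr.
by rewrite sum_delta_l.
Qed.

Lemma ampl_kraus (J : finType) k p q (K : J -> 'M[C]_(p,q)) (X : 'M[C]_(k * p)) :
  ampliation k (kraus K) X = kraus (fun j => 1%:M *t K j) X.
Proof.
apply/matrixP=> i j.
case: (mxtens_indexP i) => i1 i2; case: (mxtens_indexP j) => j1 j2.
rewrite /ampliation [LHS]mxE !mxtens_indexK /kraus !summxE; apply: eq_bigr => jj _.
rewrite adj_tens adj1 mul_tens1E [LHS]mxE; apply: eq_bigr => v _.
rewrite tens1_mulE [in LHS]mxE; congr (_ * _); apply: eq_bigr => u _.
by rewrite [X in _ * X = _]mxE.
Qed.

Lemma kraus_cp (J : finType) p q (K : J -> 'M[C]_(p,q)) : completely_positive (kraus K).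
Proof. by move=> k X pX; rewrite ampl_kraus; apply: kraus_psd. Qed.
Lemma sum_pair_gen (R : nmodType) (I J : finType) (F : I * J -> R) :
  \sum_p F p = \sum_i \sum_j F (i, j).
Proof. by rewrite pair_big; apply: eq_bigr => -[i j]. Qed.

Lemma reindex_gen (R : nmodType) (I J : finType) (h : J -> I) (F : I -> R) :
  bijective h -> \sum_i F i = \sum_j F (h j).
Proof. by move=> [g hg gh]; apply: reindex; exists g => x _. Qed.

Lemma sum_const_gen (R : nmodType) (I : finType) (x : R) : \sum_(i : I) x = x *+ #|I|.
Proof. exact: sumr_const. Qed.

Lemma unit_noeig0 n (A : 'M[C]_n) : ~~ eigenvalue A 0 -> A \in unitmx.
Proof.
by rewrite /eigenvalue /eigenspace negbK raddf0 subr0 kermx_eq0 row_free_unit.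
Qed.

Lemma psd1 n : psd (1%:M : 'M[C]_n).
Proof. by split; [exact: adj1 | move=> v; rewrite mulmx1 normv_ge0]. Qed.

Lemma psd_delta n (i : 'I_n) : psd (delta_mx i i : 'M[C]_n).
Proof.
have -> : (delta_mx i i : 'M[C]_n) = adj (delta_mx 0 i : 'M[C]_(1, n)) *m 1%:M *m delta_mx 0 i.
  by rewrite mulmx1 adj_delta mul_delta_mx.
by apply: psd_conj; apply: psd1.
Qed.

Lemma natV_conj (k : nat) : ((k%:R)^-1 : C)^* = (k%:R)^-1.
Proof. by apply: conj_Creal; apply: ger0_real; rewrite invr_ge0 ler0n. Qed.

Lemma posdef_scalar n (c : C) : 0 < c -> posdef (c%:M : 'M[C]_n).
Proof.
move=> c0; split; first by rewrite adj_scalar conj_Creal // gtr0_real.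
move=> v nv; rewrite mul_mx_scalar -scalemxAl mxE; apply: mulr_gt0 => //.
exact: normv_gt0.
Qed.

Lemma natV_gt0 (k : nat) : (0 < k)%N -> 0 < ((k%:R)^-1 : C).
Proof. by move=> k0; rewrite invr_gt0 ltr0n. Qed.

Lemma natV_mul (k : nat) : (0 < k)%N -> (k%:R : C) * (k%:R)^-1 = 1.
Proof. by move=> k0; rewrite mulfV // pnatr_eq0 -lt0n. Qed.

Lemma tens_mulE m p r (A : 'M[C]_m) (B : 'M[C]_p) (w : 'M[C]_(m * p, r)) i a c :
  ((A *t B) *m w) (mxtens_index (i, a)) c =
  \sum_k \sum_b A i k * B a b * w (mxtens_index (k, b)) c.
Proof.
by rewrite mxE sum_tens; apply: eq_bigr => k _; apply: eq_bigr => b _; rewrite tensmxE.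
Qed.

Lemma tens_delta_mulE m p (A : 'M[C]_m) (a b : 'I_p) (w : 'cV[C]_(m * p)) i :
  ((A *t delta_mx a b) *m w) (mxtens_index (i, a)) 0 =
  (A *m \col_k w (mxtens_index (k, b)) 0) i 0.
Proof.
rewrite tens_mulE mxE; apply: eq_bigr => k _; rewrite mxE.
rewrite (bigD1_gen b) // sum0_gen ?addr0.
  by rewrite mxE !eqxx mulr1.
by move=> c /andP [_ /negPf hc]; rewrite mxE eqxx hc mulr0 mul0r.
Qed.

Lemma cV_neq0 m (w : 'cV[C]_m) : w != 0 -> exists i, w i 0 != 0.
Proof.
move=> nw; case/boolP: [exists i, w i 0 != 0] => [/existsP [i hi]|/existsPn h].
  by exists i.
case/eqP: nw; apply/matrixP=> i j; rewrite [j]ord1 mxE.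
by have := h i; rewrite negbK => /eqP.
Qed.

Lemma mxtrace_delta n (i j : 'I_n) : \tr (delta_mx i j : 'M[C]_n) = (i == j)%:R.
Proof.
rewrite /mxtrace (bigD1_gen i) // sum0_gen ?addr0.
  by rewrite mxE eqxx eq_sym.
by move=> k /andP [_ /negPf hk]; rewrite mxE hk.
Qed.

Lemma ptrace2_mul_tens n m (M : 'M[C]_n) (Z B : 'M[C]_m) :
  ptrace2 ((1%:M *t Z) *m (M *t B)) = \tr (Z *m B) *: M.
Proof. by rewrite tensmx_mul mul1mx ptrace2_tens. Qed.

Lemma natV_muln (k : nat) : (0 < k)%N -> ((k%:R)^-1 : C) *+ k = 1.
Proof. by move=> k0; rewrite -(mulr_natr ((k%:R)^-1 : C) k) mulVf // pnatr_eq0 -lt0n. Qed.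
Definition KrL (X : finType) n (E : X -> 'M[C]_n) (p : X * 'I_#|X|) : 'M[C]_(n * #|X|) :=
  msqrt (E p.1) *t delta_mx p.2 (enum_rank p.1).
Definition chanL (X : finType) n (E : X -> 'M[C]_n) := kraus (KrL E).
Definition ZpL (X : finType) (x : X) : 'M[C]_#|X| := delta_mx (enum_rank x) (enum_rank x).
Definition xiL (X : finType) : 'M[C]_#|X| := ((#|X|%:R)^-1)%:M.
Definition schemeL (X : finType) n (E : X -> 'M[C]_n) : scheme n X :=
  @Scheme n X #|X| (xiL X) (chanL E) (@ZpL X).

Lemma obs_psd (X : finType) n (E : X -> 'M[C]_n) x : observable E -> psd (E x).
Proof. by case=> _ h _; case: (h x). Qed.

Lemma sqP (X : finType) n (E : X -> 'M[C]_n) x : observable E ->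
  adj (msqrt (E x)) = msqrt (E x) /\ msqrt (E x) *m msqrt (E x) = E x.
Proof. by move=> /(obs_psd x) /msqrtP [[h _] e]. Qed.

Lemma sq_unit (X : finType) n (E : X -> 'M[C]_n) x : observable E -> completely_unsharp E ->
  msqrt (E x) \in unitmx.
Proof.
move=> oE uE; have [_ e] := sqP x oE.
have := unit_noeig0 (proj1 (uE x)); rewrite -{1}e unitmx_mul.
by case/andP.
Qed.

Lemma KrL_sum (X : finType) n (E : X -> 'M[C]_n) : observable E ->
  \sum_p KrL E p *m adj (KrL E p) = 1%:M.
Proof.
move=> oE.
have h : forall x a, KrL E (x, a) *m adj (KrL E (x, a)) = E x *t delta_mx a a.
  move=> x a; rewrite /KrL adj_tens (proj1 (sqP x oE)) adj_delta tensmx_mul.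
  by rewrite (proj2 (sqP x oE)) mul_delta_mx.
rewrite sum_pair_gen.
under eq_bigr => x _ do under eq_bigr => a _ do rewrite h.
under eq_bigr => x _ do rewrite -tensmx_sumr -mx1_sum_delta.
rewrite -tensmx_suml; case: oE => _ _ ->; exact: tens11.
Qed.

Lemma KrL_nz (X : finType) n (E : X -> 'M[C]_n) : observable E -> completely_unsharp E ->
  forall w : 'cV[C]_(n * #|X|), w != 0 -> exists p, KrL E p *m w != 0.
Proof.
move=> oE uE w /cV_neq0 [U hU].
case: (mxtens_indexP U) hU => k0 b0 hU.
exists (enum_val b0, b0); apply/negP => /eqP h0.
pose wb : 'cV[C]_n := \col_k w (mxtens_index (k, b0)) 0.
have : msqrt (E (enum_val b0)) *m wb = 0.
  apply/matrixP=> i j; rewrite [j]ord1.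
  move/matrixP: h0 => /(_ (mxtens_index (i, b0)) 0).
  rewrite /KrL tens_delta_mulE enum_valK => ->; by rewrite !mxE.
move/eqP; rewrite (negbTE (unit_mul_neq0 (sq_unit (enum_val b0) oE uE) _)) //.
apply/eqP => /matrixP /(_ k0 0); rewrite !mxE => h1.
by rewrite h1 eqxx in hU.
Qed.

Lemma chanL_channel (X : finType) n (E : X -> 'M[C]_n) : observable E ->
  is_channel (chanL E).
Proof.
move=> oE; split; [exact: kraus_linear | exact: kraus_cp | exact: kraus_tp (KrL_sum oE)].
Qed.

Lemma chanL_third (X : finType) n (E : X -> 'M[C]_n) : observable E -> completely_unsharp E ->
  third_law_channel (chanL E).
Proof.
move=> oE uE; split; first exact: chanL_channel.
move=> rho [pr tr]; split; last by rewrite (kraus_tp (KrL_sum oE)).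
exact: kraus_posdef pr (KrL_nz oE uE).
Qed.

Lemma xiL_full (X : finType) : (0 < #|X|)%N -> full_rank_state (xiL X).
Proof.
move=> X0; split; first exact: posdef_scalar (natV_gt0 X0).
by rewrite /xiL mxtrace_scalar natV_muln.
Qed.

Lemma ZpL_sum (X : finType) : \sum_x ZpL x = 1%:M :> 'M[C]_#|X|.
Proof.
rewrite (reindex_gen _ (@enum_val_bij X)) mx1_sum_delta; apply: eq_bigr => i _.
by rewrite /ZpL enum_valK.
Qed.

Lemma instrL (X : finType) n (E : X -> 'M[C]_n) x rho :
  scheme_instrument (schemeL E) x rho =
  ptrace2 ((1%:M *t ZpL x) *m chanL E (rho *t xiL X)).
Proof. by []. Qed.

Lemma implL (X : finType) n (E : X -> 'M[C]_n) : observable E -> (0 < #|X|)%N ->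
  implements (schemeL E) (luders E).
Proof.
move=> oE X0 x rho; rewrite instrL /chanL /kraus /xiL.
set c : C := (#|X|%:R)^-1.
have e1 : forall p : X * 'I_#|X|, adj (KrL E p) *m (rho *t c%:M) *m KrL E p =
    (msqrt (E p.1) *m rho *m msqrt (E p.1)) *t (c *: delta_mx (enum_rank p.1) (enum_rank p.1)).
  move=> p; rewrite /KrL adj_tens (proj1 (sqP p.1 oE)) adj_delta !tensmx_mul.
  by rewrite mul_mx_scalar -scalemxAl mul_delta_mx.
under eq_bigr => p _ do rewrite e1.
rewrite mulmx_sumr ptrace2_sum.
under eq_bigr => p _ do rewrite ptrace2_mul_tens.
rewrite sum_pair_gen (bigD1_gen x) // [X in _ + X]sum0_gen ?addr0.
  under eq_bigr => a _ do rewrite /ZpL -scalemxAr mul_delta_mx mxtraceZ mxtrace_delta eqxx mulr1.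
  transitivity (\sum_(a : 'I_#|X|) c *: luders E x rho); first by apply: eq_bigr.
  by rewrite sum_const_gen card_ord scalerMnl natV_muln // scale1r.
move=> y /andP [_ hy]; apply: sum0_gen => a _.
rewrite /ZpL -scalemxAr mul_delta_mx_0 ?scaler0 ?linear0 ?scale0r //.
by apply: contra hy => /eqP /enum_rank_inj ->.
Qed.

Lemma constructL (X : finType) n (E : X -> 'M[C]_n) : observable E -> completely_unsharp E ->
  (0 < #|X|)%N -> exists S : scheme n X, third_law_scheme S /\ implements S (luders E).
Proof.
move=> oE uE X0; exists (schemeL E); split; last exact: implL.
have [pxi txi] := xiL_full X0.
split => //; last exact: chanL_third.
split.
- by split => //; exact: posdef_psd.
- exact: chanL_channel.
- by move=> x; exact: psd_delta.
- exact: ZpL_sum.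
Qed.
Lemma conjM_gen (R : numClosedFieldType) (x y : R) : (x * y)^* = x^* * y^*.
Proof. exact: rmorphM. Qed.

Definition wvec n m (v : 'cV[C]_n) (R : 'M[C]_m) (c : 'I_m) : 'cV[C]_(n * m) :=
  \matrix_(U, k) (v (mxtens_unindex U).1 0 * R (mxtens_unindex U).2 c).

Lemma wvecE n m (v : 'cV[C]_n) (R : 'M[C]_m) c i a :
  wvec v R c (mxtens_index (i, a)) 0 = v i 0 * R a c.
Proof. by rewrite mxE mxtens_indexK. Qed.

Lemma qf_ptrace n m (sigma : 'M[C]_(n * m)) (R : 'M[C]_m) (v : 'cV[C]_n) :
  adj R = R ->
  qf (ptrace2 ((1%:M *t (R *m R)) *m sigma)) v = \sum_c qf sigma (wvec v R c).
Proof.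
move=> hR.
have hR' : forall a b, (R a b)^* = R b a.
  by move=> a b; rewrite -adjE hR.
rewrite qfE.
transitivity (\sum_j \sum_a \sum_i \sum_b \sum_c
   ((v i 0)^* * R c b * sigma (mxtens_index (i, b)) (mxtens_index (j, a)) * (v j 0 * R a c))).
  apply: eq_bigr => j _.
  under eq_bigr => i _ do rewrite ptrace2E mulr_sumr mulr_suml.
  rewrite exchange_gen; apply: eq_bigr => a _; apply: eq_bigr => i _.
  rewrite tens1_mulE mulr_sumr mulr_suml; apply: eq_bigr => b _.
  rewrite mxE mulr_suml mulr_sumr mulr_suml; apply: eq_bigr => c _.
  ring.
symmetry.
transitivity (\sum_c \sum_j \sum_a \sum_i \sum_b
   ((v i 0)^* * R c b * sigma (mxtens_index (i, b)) (mxtens_index (j, a)) * (v j 0 * R a c))).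
  apply: eq_bigr => c _; rewrite qfE sum_tens; apply: eq_bigr => j _; apply: eq_bigr => a _.
  rewrite sum_tens; apply: eq_bigr => i _; apply: eq_bigr => b _.
  by rewrite !wvecE conjM_gen hR'.
rewrite exchange_gen; apply: eq_bigr => j _.
rewrite exchange_gen; apply: eq_bigr => a _.
rewrite exchange_gen; apply: eq_bigr => i _.
by rewrite exchange_gen.
Qed.

Lemma mx_neq0 m p (R : 'M[C]_(m, p)) : R != 0 -> exists a c, R a c != 0.
Proof.
move=> nR; case/boolP: [exists a, exists c, R a c != 0] => [/existsP [a /existsP [c h]]|/existsPn h].
  by exists a, c.
case/eqP: nR; apply/matrixP=> a c; rewrite mxE.
by have /existsPn /(_ c) := h a; rewrite negbK => /eqP.
Qed.

Lemma ptrace_pos n m (sigma : 'M[C]_(n * m)) (R : 'M[C]_m) (v : 'cV[C]_n) :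
  posdef sigma -> adj R = R -> R != 0 -> v != 0 ->
  0 < qf (ptrace2 ((1%:M *t (R *m R)) *m sigma)) v.
Proof.
move=> ps hR nR nv; rewrite qf_ptrace //.
have [a0 [c0 hR0]] := mx_neq0 nR.
have [i0 hv0] := cV_neq0 nv.
apply: (@sum_ge0_pos _ (fun c => qf sigma (wvec v R c)) c0).
  by move=> c; apply: psd_qf; apply: posdef_psd.
apply: posdef_qf => //; apply/negP => /eqP /matrixP /(_ (mxtens_index (i0, a0)) 0).
by rewrite wvecE mxE => /eqP; rewrite mulf_eq0 (negbTE hv0) (negbTE hR0).
Qed.

Lemma posdefZ n (c : C) (A : 'M[C]_n) : 0 < c -> posdef A -> posdef (c *: A).
Proof.
move=> c0 [hA pA]; split; first by rewrite adjZ hA conj_Creal // gtr0_real.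
by move=> v nv; rewrite -/(qf _ v) qfZ; apply: mulr_gt0 => //; apply: pA.
Qed.

Lemma qf_tens1 n m (A : 'M[C]_m) (w : 'cV[C]_(n * m)) :
  qf (1%:M *t A) w = \sum_i qf A (\col_a w (mxtens_index (i, a)) 0).
Proof.
rewrite qfE sum_tens.
transitivity (\sum_j \sum_b \sum_a (w (mxtens_index (j, a)) 0)^* * A a b * w (mxtens_index (j, b)) 0).
  apply: eq_bigr => j _; apply: eq_bigr => b _; rewrite sum_tens.
  under eq_bigr => i _ do under eq_bigr => a _ do rewrite tensmxE mxE mulrCA -mulrA.
  under eq_bigr => i _ do rewrite -mulr_sumr.
  under eq_bigr => i _ do rewrite eq_sym.
  by rewrite sum_delta_l.
apply: eq_bigr => j _; rewrite qfE; apply: eq_bigr => b _; apply: eq_bigr => a _.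
by rewrite !mxE.
Qed.

Lemma posdef_tens1 n m (A : 'M[C]_m) : posdef A -> posdef (1%:M *t A : 'M[C]_(n * m)).
Proof.
move=> [hA pA]; split; first by rewrite adj_tens adj1 hA.
move=> w nw; rewrite -/(qf _ w) qf_tens1.
have [U hU] := cV_neq0 nw; case: (mxtens_indexP U) hU => i0 a0 hU.
apply: (@sum_ge0_pos _ (fun i => qf A (\col_a w (mxtens_index (i, a)) 0)) i0).
  by move=> i; apply: psd_qf; apply: posdef_psd.
apply: pA; apply/negP => /eqP /matrixP /(_ a0 0); rewrite !mxE => h.
by rewrite h eqxx in hU.
Qed.

Lemma full_rho0 n m (xi : 'M[C]_m) : (0 < n)%N -> full_rank_state xi ->
  full_rank_state (((n%:R)^-1)%:M *t xi : 'M[C]_(n * m)).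
Proof.
move=> n0 [pxi txi]; split; last by rewrite mxtrace_tens mxtrace_scalar txi mulr1 natV_muln.
rewrite -scalemx1 tensmxZl; apply: posdefZ; first exact: natV_gt0.
exact: posdef_tens1.
Qed.

Lemma tensmxNr m n p q (A : 'M[C]_(m,n)) (B : 'M[C]_(p,q)) : A *t (- B) = - (A *t B).
Proof. by apply/matrixP=> i j; rewrite !mxE mulrN. Qed.

Lemma qf_adj_row n (A : 'M[C]_n) (u : 'rV[C]_n) : qf A (adj u) = (u *m A *m adj u) 0 0.
Proof. by rewrite /qf adjK. Qed.

Lemma adj_neq0 m p (u : 'M[C]_(m, p)) : u != 0 -> adj u != 0.
Proof. by apply: contra => /eqP h; rewrite -(adjK u) h adj0. Qed.

Lemma necessity (X : finType) (n : nat) (E : X -> 'M[C]_n) :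
  (2 <= n)%N -> observable E -> nontrivial_obs E ->
  (exists S : scheme n X, third_law_scheme S /\ implements S (luders E)) ->
  completely_unsharp E.
Proof.
move=> n2 oE [x0 ntx0] [S [[[stxi chS psdZ sumZ] fxi [chS' frS]] impl]].
have n0 : (0 < n)%N by apply: leq_trans n2.
set c : C := (n%:R)^-1.
have c0 : 0 < c := natV_gt0 n0.
have cn0 : c != 0 by rewrite gt_eqF.
set sigma := chan S ((c%:M : 'M[C]_n) *t xi S).
have [psig _] : full_rank_state sigma by apply: frS; apply: full_rho0.
have instr : forall y, ptrace2 ((1%:M *t Defs.Zp S y) *m sigma) = c *: E y.
  move=> y; have := impl y (c%:M); rewrite /scheme_instrument => ->.
  rewrite /luders mul_mx_scalar -scalemxAl.
  by rewrite (proj2 (sqP y oE)).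
have sumE : \sum_y E y = 1%:M by case: oE.
have ptr_of : forall Z : 'M[C]_(dimA S), psd Z -> Z != 0 ->
    forall v : 'cV[C]_n, v != 0 -> 0 < qf (ptrace2 ((1%:M *t Z) *m sigma)) v.
  move=> Z pZ nZ v nv; have [R [hR RR]] := psd_sq pZ.
  rewrite -RR; apply: ptrace_pos => //.
  by apply: contra nZ => /eqP R0; rewrite -RR R0 mul0mx.
move=> x; split.
- apply/negP => /eigenvalueP [u hu nu].
  have Znz : Defs.Zp S x != 0.
    apply/eqP => Z0; have := instr x; rewrite Z0 tensmx0 mul0mx ptrace2_0.
    move/esym/eqP; rewrite scaler_eq0 (negbTE cn0) /=.
    by case: oE => h _ _; rewrite (negbTE (h x)).
  have := ptr_of _ (psdZ x) Znz _ (adj_neq0 nu).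
  by rewrite instr qfZ qf_adj_row hu scale0r mul0mx mxE mulr0 ltxx.
- apply/negP => /eigenvalueP [u hu nu].
  have e1 : ptrace2 ((1%:M *t (1%:M - Defs.Zp S x)) *m sigma) = c *: (1%:M - E x).
    rewrite tensmxDr tensmxNr mulmxDl mulNmx ptrace2D ptrace2N instr.
    rewrite -sumZ tensmx_sumr mulmx_suml ptrace2_sum.
    under eq_bigr => y _ do rewrite instr.
    by rewrite -scaler_sumr sumE scalerBr.
  have [Z0|Znz] := eqVneq (1%:M - Defs.Zp S x) 0.
    have Ex1 : E x = 1%:M.
      move: e1; rewrite Z0 tensmx0 mul0mx ptrace2_0 => /esym /eqP.
      by rewrite scaler_eq0 (negbTE cn0) subr_eq0 => /eqP <-.
    have x0x : x0 != x.
      by apply/eqP => ex; have := ntx0 1; rewrite ex Ex1 eqxx.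
    have sum0 : \sum_(y | y != x) E y = 0.
      move: sumE; rewrite (bigD1_gen x) // Ex1 => /eqP.
      by rewrite -{2}[1%:M]addr0 => /eqP /addrI.
    have : E x0 = 0.
      apply: psd_q0; first exact: obs_psd.
      move=> v; have hs : \sum_(y | y != x) qf (E y) v = 0 by rewrite -qf_sum sum0 qf0.
      by apply: (psumr_eq0P _ hs x0x) => y _; apply: psd_qf; apply: obs_psd.
    by move=> Ex0; have := ntx0 0; rewrite Ex0 raddf0 eqxx.
  have pZ : psd (1%:M - Defs.Zp S x).
    have -> : 1%:M - Defs.Zp S x = \sum_(y | y != x) Defs.Zp S y.
      by rewrite -sumZ (bigD1_gen x) // addrAC subrr add0r.
    by apply: psd_sum => y _; apply: psdZ.
  have := ptr_of _ pZ Znz _ (adj_neq0 nu).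
  rewrite e1 qfZ qf_adj_row mulmxBr mulmx1 hu scale1r subrr mul0mx mxE mulr0.
  by rewrite ltxx.
Qed.

Local Close Scope ring_scope.
Unset Implicit Arguments.

Theorem mainTheorem12 (X : finType) (n : nat) (E : X -> 'M[C]_n) :
  (2 <= n)%N -> observable E -> nontrivial_obs E ->
  ((exists S : scheme n X, third_law_scheme S /\ implements S (luders E))
   <-> completely_unsharp E).
Proof.
move=> n2 oE nt; split; first exact: necessity.
move=> uE; apply: constructL => //.
by case: nt => x _; apply/card_gt0P; exists x.
Qed.
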